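(* Let $d\ge1$ and $n\ge3$ be integers and let $\mathcal{L}$ be the FTCS operator with parameter $r=1/(2d)$, i.e. $(\mathcal{L}v)(\mathbf{k})=\frac{1}{2d}\sum_{i=1}^d\big(v(\mathbf{k}+\mathbf{e}_i)+v(\mathbf{k}-\mathbf{e}_i)\big)$ for $v\in\mathbb{R}^{\mathbb{Z}_n^d}$ (indices mod $n$). Then for every entrywise nonnegative nonzero vector $\mathbf{u}\in\mathbb{R}^{\mathbb{Z}_n^d}$, $$\frac{\|\mathcal{L}\mathbf{u}\|_2^2}{\|\mathbf{u}\|_2^2}\ge\frac{1}{2d}.$$
   Context: This is the FTCS operator $\mathcal{L}=I_n^{\otimes d}+r\sum_j I_n^{\otimes(j-1)}\otimes H\otimes I_n^{\otimes(d-j)}$ ($H$ the $n\times n$ circulant with $-2$ on the diagonal and $1$ on the cyclic off-diagonals) in the case $r=\alpha\Delta t/\Delta x^2=1/(2d)$, i.e. $\Delta t=\Delta x^2/(2d\alpha)$. $\mathbf{e}_i$ is the $i$-th unit vector of $\mathbb{Z}_n^d$. *)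

(* Defs.v *)
From HB Require Import structures.
From mathcomp Require Import all_boot all_order all_algebra.
Set Implicit Arguments. Unset Strict Implicit. Unset Printing Implicit Defensive.
Import Order.TTheory GRing.Theory Num.Theory.
Local Open Scope ring_scope.

(* Points of the discrete torus Z_n^d : functions 'I_d -> 'I_n.
   Grid functions v : R^{Z_n^d} are functions grid d n -> R. *)
Definition grid (d n : nat) := {ffun 'I_d -> 'I_n}.

Definition addmod (n : nat) (a b : nat) : 'I_n.+1 :=
  @Ordinal n.+1 ((a + b) %% n.+1) (ltn_pmod _ (ltn0Sn n)).

(* k + s e_i (mod n), with s = 1 or s = n - 1 (i.e. -1 mod n).  Stated for
   the grid 'I_n.+1 so that the modulus is positive. *)
Definition shift (d n : nat) (k : grid d n.+1) (i : 'I_d) (s : nat)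
  : grid d n.+1 :=
  [ffun j => if j == i then addmod n (k j) s else k j].

Definition shiftP d n (k : grid d n.+1) i := shift k i 1.
Definition shiftM d n (k : grid d n.+1) i := shift k i n.

Definition FTCS {R : realFieldType} (d n : nat) (v : grid d n.+1 -> R)
  : grid d n.+1 -> R :=
  fun k => (2 * d%:R)^-1 *
    \sum_(i < d) (v (shiftP k i) + v (shiftM k i)).

Definition norm2 {R : realFieldType} (d n : nat) (v : grid d n -> R) : R :=
  \sum_(k : grid d n) v k ^+ 2.

(* Main.v *)
Require Import Defs.
From HB Require Import structures.
From mathcomp Require Import all_boot all_order all_algebra.
Import Order.TTheory GRing.Theory Num.Theory.
Local Open Scope ring_scope.

Lemma sq_sum_ge (R : realFieldType) (I : Type) (s : seq I) (F : I -> R) :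
  (forall i, 0 <= F i) -> \sum_(i <- s) F i ^+ 2 <= (\sum_(i <- s) F i) ^+ 2.
Proof.
move=> F0; elim: s => [|a s IH]; first by rewrite !big_nil expr0n.
rewrite !big_cons sqrrD -addrA lerD2l; apply: le_trans IH _.
by rewrite lerDr mulrn_wge0 // mulr_ge0 // sumr_ge0.
Qed.

Lemma shift_inj d n (i : 'I_d) (s : nat) : injective (fun k : grid d n.+1 => shift k i s).
Proof.
move=> k1 k2 /= /ffunP H; apply/ffunP => j; have := H j; rewrite !ffunE.
case: (j == i) => // /(congr1 val) /= /eqP.
rewrite eqn_modDr !modn_small // => /eqP e; exact: val_inj.
Qed.

Lemma sum_shift (R : realFieldType) d n (i : 'I_d) (s : nat) (f : grid d n.+1 -> R) :
  \sum_k f (shift k i s) = \sum_k f k.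
Proof. by rewrite [RHS](reindex_inj (@shift_inj d n i s)). Qed.

Theorem mainTheorem4 (R : realFieldType) (d n : nat) (hd : (1 <= d)%N)
  (hn : (3 <= n.+1)%N) (u : grid d n.+1 -> R)
  (hnonneg : forall k, 0 <= u k) (hnz : exists k, u k != 0) :
  (2 * d%:R)^-1 <= norm2 (FTCS u) / norm2 u.
Proof.
have Npos : 0 < norm2 u.
  case: hnz => k0 hk0; rewrite /norm2 (bigD1 k0) //=.
  apply: (@lt_le_trans _ _ (u k0 ^+ 2)); first by rewrite exprn_gt0 // lt_def hk0 hnonneg.
  by rewrite lerDl sumr_ge0 // => k _; rewrite sqr_ge0.
have dpos : 0 < 2 * d%:R :> R by rewrite mulr_gt0 // ltr0n.
rewrite ler_pdivlMr //.
have key : \sum_k \sum_(i < d) (u (shiftP k i) ^+ 2 + u (shiftM k i) ^+ 2)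
    = (2 * d%:R) * norm2 u.
  rewrite exchange_big /=.
  under eq_bigr => i _ do rewrite big_split /= /shiftP /shiftM !(sum_shift R d n i _ (fun k => u k ^+ 2)).
  by rewrite sumr_const card_ord /norm2 -mulr2n -mulrnA -[LHS]mulr_natl natrM.
rewrite /norm2 /FTCS /=.
rewrite [in X in _ <= X](eq_bigr (fun k => (2*d%:R)^-1 ^+2 * (\sum_(i<d) (u (shiftP k i) + u (shiftM k i)))^+2)); last by move=> k _ /=; rewrite exprMn.
rewrite -mulr_sumr -/(norm2 u).
apply: (@le_trans _ _ ((2 * d%:R) ^-1 ^+ 2 * ((2 * d%:R) * norm2 u))).
  by rewrite expr2 -mulrA (mulrA _ (2 * d%:R)) mulVf ?gt_eqF // mul1r.
apply: ler_wpM2l; first by rewrite exprn_ge0 // invr_ge0 ltW.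
rewrite -key; apply: ler_sum => k _.
apply: le_trans (sq_sum_ge R _ (index_enum _) (fun i => u (shiftP k i) + u (shiftM k i)) _); last by move=> i; rewrite addr_ge0.
by apply: ler_sum => i _; rewrite sqrrD addrAC lerDl mulrn_wge0 // mulr_ge0.
Qed.
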